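(* Let $\Sigma$ be an alphabet and let $\mathcal P=(n,\Gamma,I,M,P,p_0,l)$ be a $\mathbb B\langle\Sigma\cup\{\epsilon\}\rangle$-$\omega$-pushdown automaton over $(\mathbb B\langle\langle\Sigma^*\rangle\rangle,\mathbb B\langle\langle\Sigma^\omega\rangle\rangle)$, with $l\in\{0,\dots,n\}$. Let $\sigma_{x_0}=I(M^* )_{p_0,\epsilon}P$ and $\tau_{z_0}=I(M^{\omega,l})_{p_0}$ be the $x_0$- and $z_0$-components of the solution of order $l$, regarded (via the isomorphism $\mathbb B\langle\langle\Sigma^*\rangle\rangle\times\mathbb B\langle\langle\Sigma^\omega\rangle\rangle\cong 2^{\Sigma^*}\times2^{\Sigma^\omega}$) as a language of finite words and a language of infinite words. Then $$L(G_l)=\sigma_{x_0}\cup\tau_{z_0}.$$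
   Context: $\mathbb B=(\{0,1\},\vee,\wedge,{}^*,0,1)$ with $0^*=1^*=1$ is a complete star-omega semiring, and $(\mathbb B\langle\langle\Sigma^*\rangle\rangle,\mathbb B\langle\langle\Sigma^\omega\rangle\rangle)$ (power series over finite/infinite words, identified with languages) is a complete semiring-semimodule pair (infinite sums = unions, infinite products = concatenations). For a series $s$ and word $a$, $(s,a)$ is the coefficient of $a$ in $s$; $\mathbb B\langle\Sigma\cup\{\epsilon\}\rangle$ is the set of series with support in $\Sigma\cup\{\epsilon\}$. A pushdown transition matrix $M$ ($\Gamma^*\times\Gamma^*$ matrix with $n\times n$ blocks over $\mathbb B\langle\Sigma\cup\{\epsilon\}\rangle$) satisfies (i) for each $p\in\Gamma$ only finitely many blocks $M_{p,\pi}$ are nonzero, and (ii) $M_{\pi_1,\pi_2}=M_{p,\pi}$ if $\pi_1=p\pi'$, $\pi_2=\pi\pi'$ for some $p\in\Gamma$, $\pi,\pi'\in\Gamma^*$, and $0$ otherwise. The automaton consists of states $1,\dots,n$, pushdown alphabet $\Gamma$, such an $M$, $I\in(\mathbb B\langle\Sigma\cup\{\epsilon\}\rangle)^{1\times n}$, $P\in(\mathbb B\langle\Sigma\cup\{\epsilon\}\rangle)^{n\times 1}$, $p_0\in\Gamma$, $l$. $M^*=\sum_{m\ge0}M^m$ with blocks $(M^* )_{\pi,\pi'}$; with $P_l=\{(j_1,j_2,\dots)\in\{1,\dots,n\}^\omega\mid j_t\le l\text{ for infinitely many }t\}$, $((M^{\omega,l})_\pi)_i=\sum_{\pi_1,\pi_2,\ldots\in\Gamma^*}\sum_{(j_1,j_2,\ldots)\in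 P_l}(M_{\pi,\pi_1})_{i,j_1}(M_{\pi_1,\pi_2})_{j_1,j_2}\cdots$. The mixed context-free grammar $G_l=(X,Z,\Sigma,P_X,P_Z,x_0,z_0,l)$ has variables $X=\{x_0\}\cup\{[i,p,j]\mid 1\le i,j\le n,\ p\in\Gamma\}$ (for finite derivations), $Z=\{z_0\}\cup\{[i,p]\mid1\le i\le n,\ p\in\Gamma\}$ (for infinite derivations), and productions: $P_X$: $x_0\to a_1[m_1,p_0,m_2]a_2$ whenever $(I_{m_1},a_1)\ne0$, $(P_{m_2},a_2)\ne0$, $a_1,a_2\in\Sigma\cup\{\epsilon\}$; and $[i,p,j]\to a[m_1,p_1,m_2][m_2,p_2,m_3]\cdots[m_k,p_k,j]$ whenever $k\ge0$, $p_1,\dots,p_k\in\Gamma$, $1\le m_1,\dots,m_k\le n$, $a\in\Sigma\cup\{\epsilon\}$, $((M_{p,p_1\dots p_k})_{i,m_1},a)\ne0$ (for $k=0$ the production is $[i,p,j]\to a$ with $((M_{p,\epsilon})_{i,j},a)\ne0$). $P_Z$: $z_0\to a[m,p_0]$ whenever $(I_m,a)\ne0$, $a\in\Sigma\cup\{\epsilon\}$; and $[i,p]\to a[m_1,p_1,m_2]\cdots[m_{j-1},p_{j-1},m_j][m_j,p_j]$ whenever $k\ge1$, $1\le j\le k$, $p_1,\dots,p_k\in\Gamma$, $1\le m_1,\dots,m_j\le n$, $a\in\Sigma\cup\{\epsilon\}$, $((M_{p,p_1\dots p_k})_{i,m_1},a)\ne0$. Finite leftmost derivations $\Rightarrow_L^*$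 with $P_X$ are as usual. An infinite derivation of $w\in\Sigma^\omega$ is a sequence $z_0\Rightarrow\alpha_0[i_0,q_0]\Rightarrow_L^*w_0[i_0,q_0]\Rightarrow w_0\alpha_1[i_1,q_1]\Rightarrow_L^*w_0w_1[i_1,q_1]\Rightarrow\cdots\Rightarrow_L^* w_0\cdots w_m[i_m,q_m]\Rightarrow w_0\cdots w_m\alpha_{m+1}[i_{m+1},q_{m+1}]\Rightarrow_L^*\cdots$ where $z_0\to\alpha_0[i_0,q_0]$ and $[i_m,q_m]\to\alpha_{m+1}[i_{m+1},q_{m+1}]$ are productions in $P_Z$, each $\alpha_m\Rightarrow_L^* w_m\in\Sigma^*$ is a finite leftmost derivation with $P_X$, and $w=w_0w_1w_2\cdots$. It is a derivation $z_0\Rightarrow_L^{\omega,l}w$ if, letting $i_m^1,\dots,i_m^{t_m}$ be the first components $i$ of the triple variables $[i,p,j]$ rewritten (in order) in $\alpha_m\Rightarrow_L^*w_m$, the sequence $i_0,i_1^1,\dots,i_1^{t_1},i_1,i_2^1,\dots,i_2^{t_2},i_2,\dots$ lies in $P_l$. Then $L(G_l)=\{w\in\Sigma^*\mid x_0\Rightarrow_L^*w\}\cup\{w\in\Sigma^\omega\mid z_0\Rightarrow_L^{\omega,l}w\}$. *)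

(* Defs.v *)
(* Languages are Prop-valued predicates:
   finite words = seq Sigma, infinite words = nat -> Sigma.
   States 1..n of the paper are represented by 'I_n (0-based): paper state
   j+1 <-> ordinal j; hence "j <= l" becomes "val j < l". *)
From mathcomp Require Import all_boot.
Set Implicit Arguments. Unset Strict Implicit. Unset Printing Implicit Defensive.

Definition optw {S : Type} (a : option S) : seq S :=
  if a is Some x then [:: x] else [::].

Fixpoint prepend {S : Type} (u : seq S) (w : nat -> S) : nat -> S :=
  match u with
  | [::] => w
  | x :: u' => fun k => if k is k'.+1 then prepend u' w k' else x
  end.

(* w = W 0 W 1 W 2 ... (infinite concatenation of finite words, giving an
   omega-word: every finite prefix agrees and the lengths are unbounded) *)
Definition is_inf_concat {S : Type} (W : nat -> seq S) (w : nat -> S) : Prop :=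
  (forall m k, k < size (flatten (mkseq W m.+1)) ->
     w k = nth (w k) (flatten (mkseq W m.+1)) k) /\
  (forall N, exists m, N <= size (flatten (mkseq W m.+1))).

Definition in_Pl (n l : nat) (js : nat -> 'I_n) : Prop :=
  forall N, exists t, N <= t /\ val (js t) < l.

(* flattening of an infinite sequence of (nonempty) finite blocks into a
   stream; the fuel k.+1 suffices when all blocks are nonempty. *)
Fixpoint flat_aux {T : Type} (x0 : T) (b : nat -> seq T) (fuel m k : nat) : T :=
  match fuel with
  | 0 => x0
  | f.+1 => if k < size (b m) then nth x0 (b m) k
            else flat_aux x0 b f m.+1 (k - size (b m))
  end.
Definition flat {T : Type} (x0 : T) (b : nat -> seq T) (k : nat) : T :=
  flat_aux x0 b k.+1 0 k.

Section PDA.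
Variables (Sigma Gamma : finType) (n : nat).
(* blocks M_{p,pi} of the pushdown transition matrix; entries are elements
   of B<Sigma u {eps}>, i.e. subsets of option Sigma (None = epsilon) *)
Variable Mb : Gamma -> seq Gamma -> 'I_n -> 'I_n -> option Sigma -> bool.
Variables (I P : 'I_n -> option Sigma -> bool) (p0 : Gamma) (l : nat).

Definition pd_finite : Prop :=
  forall p, exists s : seq (seq Gamma),
    forall pi, pi \notin s -> forall i j a, ~~ Mb p pi i j a.

Definition Mfull (pi1 pi2 : seq Gamma) (i j : 'I_n) (a : option Sigma) : Prop :=
  exists p pi pi', pi1 = p :: pi' /\ pi2 = pi ++ pi' /\ Mb p pi i j a.

Inductive Mstar : seq Gamma -> 'I_n -> seq Gamma -> 'I_n -> seq Sigma -> Prop :=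
| Mstar0 pi i : Mstar pi i pi i [::]
| MstarS pi i pi1 k pi' j a w :
    Mfull pi pi1 i k a -> Mstar pi1 k pi' j w -> Mstar pi i pi' j (optw a ++ w).

Definition Momega (pi : seq Gamma) (i : 'I_n) (w : nat -> Sigma) : Prop :=
  exists (pis : nat -> seq Gamma) (js : nat -> 'I_n) (as_ : nat -> option Sigma),
    pis 0 = pi /\ js 0 = i /\
    (forall t, Mfull (pis t) (pis t.+1) (js t) (js t.+1) (as_ t)) /\
    in_Pl l (fun t => js t.+1) /\
    is_inf_concat (fun t => optw (as_ t)) w.

Definition sigma_x0 (w : seq Sigma) : Prop :=
  exists m1 m2 a1 u a2, I m1 a1 /\ Mstar [:: p0] m1 [::] m2 u /\ P m2 a2 /\
    w = optw a1 ++ u ++ optw a2.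

Definition tau_z0 (w : nat -> Sigma) : Prop :=
  exists m a w', I m a /\ Momega [:: p0] m w' /\ w = prepend (optw a) w'.

Inductive xsym : Type :=
| XT of Sigma
| X0
| XV of 'I_n & Gamma & 'I_n.

Definition topt (a : option Sigma) : seq xsym := map XT (optw a).

(* chain [m1,p1,m2][m2,p2,m3]...[mk,pk,j] for ms = m1..mk, ps = p1..pk *)
Fixpoint chain (ms : seq 'I_n) (ps : seq Gamma) (j : 'I_n) : seq xsym :=
  match ms, ps with
  | m :: ms', p :: ps' => XV m p (head j ms') :: chain ms' ps' j
  | _, _ => [::]
  end.

(* For [i,p,j]: ps = p1..pk, ms = m1..mk (k >= 0); the
   condition is on the (i, m1) entry of M_{p,p1..pk}, with m1 = head j ms
   (for k = 0 this is the (i,j) entry and the right side is just a). *)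
Definition prodX (A : xsym) (g : seq xsym) : Prop :=
  match A with
  | XT _ => False
  | X0 => exists a1 m1 m2 a2, I m1 a1 /\ P m2 a2 /\
            g = topt a1 ++ XV m1 p0 m2 :: topt a2
  | XV i p j => exists a (ps : seq Gamma) (ms : seq 'I_n),
            size ms = size ps /\ Mb p ps i (head j ms) a /\
            g = topt a ++ chain ms ps j
  end.

Inductive lstep : seq xsym -> xsym -> seq xsym -> Prop :=
| LStep (u : seq Sigma) A g beta :
    prodX A g -> lstep (map XT u ++ A :: beta) A (map XT u ++ g ++ beta).

Inductive lderiv : seq xsym -> seq xsym -> seq xsym -> Prop :=
| LDeriv0 s : lderiv s s [::]
| LDerivS s A s' s'' tr : lstep s A s' -> lderiv s' s'' tr -> lderiv s s'' (A :: tr).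

Definition firsts (tr : seq xsym) : seq 'I_n :=
  pmap (fun A => if A is XV i _ _ then Some i else None) tr.

(* productions P_Z, split as  lhs -> alpha [i',q']  *)
Definition prodZ0 (alpha : seq xsym) (iq : 'I_n * Gamma) : Prop :=
  exists a, I iq.1 a /\ iq.2 = p0 /\ alpha = topt a.

(* [i,p] -> a [m1,p1,m2]...[m_{j-1},p_{j-1},m_j][m_j,p_j] with
   ps = p1..pk = ps1 ++ p_j :: ps2, ms1 = m1..m_{j-1}, m_j = i', m1 = head i' ms1 *)
Definition prodZ (ip : 'I_n * Gamma) (alpha : seq xsym) (iq : 'I_n * Gamma) : Prop :=
  exists a (ps1 ps2 : seq Gamma) (ms1 : seq 'I_n),
    size ms1 = size ps1 /\
    Mb ip.2 (ps1 ++ iq.2 :: ps2) ip.1 (head iq.1 ms1) a /\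
    alpha = topt a ++ chain ms1 ps1 iq.1.

Definition LG_fin (w : seq Sigma) : Prop := exists tr, lderiv [:: X0] (map XT w) tr.

Definition LG_omega (w : nat -> Sigma) : Prop :=
  exists (iq : nat -> 'I_n * Gamma) (alpha : nat -> seq xsym)
         (W : nat -> seq Sigma) (tr : nat -> seq xsym),
    prodZ0 (alpha 0) (iq 0) /\
    (forall m, prodZ (iq m) (alpha m.+1) (iq m.+1)) /\
    (forall m, lderiv (alpha m) (map XT (W m)) (tr m)) /\
    is_inf_concat W w /\
    (* the sequence i_0, i_1^1..i_1^{t_1}, i_1, i_2^1.., i_2, ... lies in P_l *)
    in_Pl l (flat (iq 0).1
      (fun m => if m is m'.+1 then firsts (tr m) ++ [:: (iq m).1]
                else [:: (iq 0).1])).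

End PDA.

(* Main.v *)
Require Import Defs.
From mathcomp Require Import all_boot zify.
From Stdlib Require Import ClassicalEpsilon FunctionalExtensionality.
Set Implicit Arguments. Unset Strict Implicit. Unset Printing Implicit Defensive.

Local Notation FF b m := (flatten (mkseq b (m).+1)).

Section Streams.
Variables (T S : Type).

Lemma preS (b : nat -> seq T) m :
  flatten (mkseq b m.+1) = flatten (mkseq b m) ++ b m.
Proof. by rewrite /mkseq -addn1 iotaD map_cat flatten_cat /= cats0. Qed.

Lemma mkseq_cons (f : nat -> T) m : mkseq f m.+1 = f 0 :: mkseq (fun i => f i.+1) m.
Proof.
rewrite /mkseq /=; congr (_ :: _).
by elim: m 0 => //= m IH k; rewrite IH.
Qed.

Lemma mkseq_le (f : nat -> T) n1 n2 : n1 <= n2 -> exists s, mkseq f n2 = mkseq f n1 ++ s.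
Proof. move=> H; rewrite /mkseq -(subnKC H) iotaD map_cat; eexists; reflexivity. Qed.

Lemma ic_regroup (V W : nat -> seq T) w :
 (forall m, exists m' s, FF V m' = FF W m ++ s) ->
 (forall m', exists m s, FF W m = FF V m' ++ s) ->
 is_inf_concat W w -> is_inf_concat V w.
Proof.
move=> H1 H2 [Ha Hb]; split.
- move=> m' k Hk; have [m [s Hs]] := H2 m'.
  have Hk' : k < size (FF W m) by rewrite Hs size_cat ltn_addr.
  by rewrite {1}(Ha m k Hk') Hs nth_cat Hk.
- move=> N; have [m Hm] := Hb N; have [m' [s Hs]] := H1 m.
  exists m'; rewrite Hs size_cat; exact: leq_trans Hm (leq_addr _ _).
Qed.

Lemma ic_unique (b : nat -> seq T) w1 w2 :
  is_inf_concat b w1 -> is_inf_concat b w2 -> forall k, w1 k = w2 k.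
Proof.
move=> [A1 B1] [A2 _] k; have [m Hm] := B1 k.+1.
rewrite (A1 m k Hm) (A2 m k Hm); exact: set_nth_default.
Qed.

Lemma flat_aux_nth (x0 : T) b f m0 k N : (forall i, 0 < size (b i)) -> k < f ->
  k < size (flatten (map b (iota m0 N))) ->
  flat_aux x0 b f m0 k = nth x0 (flatten (map b (iota m0 N))) k.
Proof.
move=> Hb; elim: f m0 k N => [//|f IH] m0 k N Hkf; case: N => [//|N].
rewrite /= nth_cat => HkN; case: ifP => Hk //.
have := Hb m0; move: Hk; rewrite size_cat in HkN => Hk Hs.
apply: IH; lia.
Qed.

Lemma size_FF (b : nat -> seq T) m : (forall i, 0 < size (b i)) -> m < size (FF b m).
Proof.
move=> Hb; elim: m => [|m IH]; first by rewrite /= cats0 Hb.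
rewrite preS size_cat; have := Hb m.+1; lia.
Qed.

Lemma flat_ic (x0 : T) b : (forall m, 0 < size (b m)) -> is_inf_concat b (flat x0 b).
Proof.
move=> Hb; split.
- move=> m k Hk; rewrite /flat (@flat_aux_nth _ _ _ _ _ m.+1) //; exact: set_nth_default.
- move=> N; exists N; exact: ltnW (size_FF _ Hb).
Qed.

Lemma flatten_single (f : nat -> T) s : flatten (map (fun t => [:: f t]) s) = map f s.
Proof. by elim: s => //= a s ->. Qed.

Lemma ic_single (x : nat -> T) : is_inf_concat (fun t => [:: x t]) x.
Proof.
split.
- move=> m k; rewrite /mkseq flatten_single -/(mkseq x m.+1) size_mkseq => Hk.
  by rewrite nth_mkseq.
- move=> N; exists N; by rewrite /mkseq flatten_single size_map size_iota.
Qed.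

Lemma ic_map (f : T -> S) b x : is_inf_concat b x ->
  is_inf_concat (fun m => map f (b m)) (fun k => f (x k)).
Proof.
have E m : FF (fun m => map f (b m)) m = map f (FF b m).
  by rewrite map_flatten /mkseq -map_comp.
move=> [Ha Hb]; split.
- move=> m k; rewrite E size_map => Hk; rewrite (nth_map (x k)) //; congr f; exact: Ha.
- move=> N; have [m Hm] := Hb N; exists m; by rewrite E size_map.
Qed.

Lemma ic_prefix (b : nat -> seq T) x m : is_inf_concat b x -> mkseq x (size (FF b m)) = FF b m.
Proof.
move=> [Ha _]; case Hx : (FF b m) => [|y s]; first by [].
apply: (@eq_from_nth _ y); first by rewrite size_mkseq.
rewrite size_mkseq => k Hk; rewrite nth_mkseq // -Hx (Ha m k); last by rewrite Hx.
by apply: set_nth_default; rewrite Hx.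
Qed.

End Streams.
Section Streams2.
Variables (T S : Type).
Lemma flatten_flatmap (h : T -> seq S) (s : seq (seq T)) :
  flatten (map (fun y => flatten (map h y)) s) = flatten (map h (flatten s)).
Proof. by elim: s => //= a s IH; rewrite map_cat flatten_cat IH. Qed.

Lemma ic_flatmap (h : T -> seq S) b x w : (forall m, 0 < size (b m)) -> is_inf_concat b x ->
  is_inf_concat (fun m => flatten (map h (b m))) w -> is_inf_concat (fun t => h (x t)) w.
Proof.
move=> Hb Hx; apply: ic_regroup.
- move=> m; exists (size (FF b m)).-1, [::].
  rewrite prednK; last by have := size_FF m Hb; lia.
  rewrite cats0 /mkseq map_comp -/(mkseq x _) ic_prefix // -flatten_flatmap.
  by rewrite /mkseq -map_comp.
- move=> m'; exists m'.
  have [s Hs] : exists s, FF b m' = mkseq x m'.+1 ++ s.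
    rewrite -(ic_prefix m' Hx); apply: mkseq_le; exact: size_FF.
  exists (flatten (map h s)).
  have -> : FF (fun m => flatten (map h (b m))) m' = flatten (map h (FF b m')).
    by rewrite -flatten_flatmap /mkseq -map_comp.
  by rewrite Hs map_cat flatten_cat /mkseq -map_comp.
Qed.

End Streams2.
Section Streams3.
Variables (T : Type).
Lemma ic_shift (W : nat -> seq T) w : is_inf_concat W w ->
  is_inf_concat (fun m => W m.+1) (fun k => w (size (W 0) + k)).
Proof.
have E m : FF W m.+1 = W 0 ++ FF (fun m => W m.+1) m.
  by rewrite mkseq_cons.
move=> [Ha Hb]; split.
- move=> m k Hk; rewrite (Ha m.+1); last by rewrite E size_cat ltn_add2l.
  rewrite E nth_cat ifN; last lia.
  by rewrite addKn; apply: set_nth_default.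
- move=> N; have [m Hm] := Hb (size (W 0) + N); exists m.
  have : size (FF W m) <= size (FF W m.+1) by rewrite (preS W m.+1) size_cat leq_addr.
  rewrite E size_cat; lia.
Qed.

Lemma prepend_nth (u : seq T) w' k :
  prepend u w' k = if k < size u then nth (w' 0) u k else w' (k - size u).
Proof.
elim: u k => [|x u IH] [|k] //=; by rewrite ?subn0 // IH ltnS subSS.
Qed.

Lemma ic_prepend_eq (W : nat -> seq T) w : is_inf_concat W w ->
  forall k, prepend (W 0) (fun k => w (size (W 0) + k)) k = w k.
Proof.
move=> [Ha _] k; rewrite prepend_nth; case: ifP => Hk.
- rewrite (Ha 0 k) /= ?cats0 //; exact: set_nth_default.
- by rewrite subnKC // leqNgt Hk.
Qed.

Lemma ic_cons (u : seq T) W w : is_inf_concat W w ->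
  is_inf_concat (fun m => if m is m'.+1 then W m' else u) (prepend u w).
Proof.
set V := fun m => _.
have E m : FF V m.+1 = u ++ FF W m by rewrite mkseq_cons.
move=> [Ha Hb]; split.
- case=> [|m] k.
  + rewrite /= cats0 => Hk; rewrite prepend_nth Hk; exact: set_nth_default.
  + rewrite E size_cat => Hk; rewrite prepend_nth nth_cat.
    case: ifP => Hk'; first exact: set_nth_default.
    rewrite {1}(Ha m); [apply: set_nth_default|]; move: Hk'; lia.
- move=> N; have [m Hm] := Hb N; exists m.+1.
  rewrite E size_cat; lia.
Qed.

Lemma ic_spec (x0 : T) b x : (forall m, 0 < size (b m)) -> is_inf_concat b x ->
  forall k, exists m o, o < size (b m) /\ x k = nth x0 (b m) o /\
    x k.+1 = (if o.+1 < size (b m) then nth x0 (b m) o.+1 else nth x0 (b m.+1) 0).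
Proof.
move=> Hb [Ha _] k.
have [m Hm] : exists m, size (flatten (mkseq b m)) <= k < size (flatten (mkseq b m.+1)).
  elim: k => [|k [m Hm]].
  - exists 0; by rewrite preS /= Hb.
  - move: Hm; rewrite preS size_cat => Hm.
    case: (ltnP k.+1 (size (flatten (mkseq b m)) + size (b m))) => H.
    + exists m; rewrite preS size_cat; lia.
    + exists m.+1; rewrite (preS b m.+1) size_cat (preS b m) size_cat; have := Hb m.+1; lia.
move: Hm; rewrite preS size_cat => Hm.
set p := size (flatten (mkseq b m)) in Hm.
exists m, (k - p); split; first lia.
split.
- rewrite (Ha m k); last by rewrite preS size_cat; lia.
  rewrite preS nth_cat -/p ifN; last lia.
  apply: set_nth_default; lia.
- case: ifP => H.
  + rewrite (Ha m k.+1); last by rewrite preS size_cat; lia.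
    rewrite preS nth_cat -/p ifN; last lia.
    rewrite -subSn; last lia. apply: set_nth_default; lia.
  + rewrite (Ha m.+1 k.+1); last by rewrite preS preS !size_cat; have := Hb m.+1; lia.
    rewrite preS nth_cat ifN; last by rewrite preS size_cat; lia.
    rewrite preS size_cat -/p.
    have -> : k.+1 - (p + size (b m)) = 0 by lia.
    apply: set_nth_default; exact: Hb.
Qed.

End Streams3.

Section PDA2.
Variables (Sigma Gamma : finType) (n : nat).
Variable Mb : Gamma -> seq Gamma -> 'I_n -> 'I_n -> option Sigma -> bool.
Variables (I P : 'I_n -> option Sigma -> bool) (p0 : Gamma) (l : nat).

Local Notation xs := (xsym Sigma Gamma n).
Local Notation XTn := (@XT Sigma Gamma n).
Local Notation Mf := (Mfull Mb).
Local Notation LD := (lderiv Mb I P p0).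
Local Notation tp := (topt Gamma n).
Local Notation ch := (chain Sigma).

Inductive RunQ : seq Gamma -> 'I_n -> seq Gamma -> 'I_n -> seq Sigma -> seq 'I_n -> Prop :=
| RunQ0 pi i : RunQ pi i pi i [::] [::]
| RunQS pi i pi1 k pi' j a w qs :
    Mf pi pi1 i k a -> RunQ pi1 k pi' j w qs -> RunQ pi i pi' j (optw a ++ w) (i :: qs).

Lemma Mfull_cons p r pi2 i j a : Mf (p :: r) pi2 i j a <-> exists ps, pi2 = ps ++ r /\ Mb p ps i j a.
Proof.
split.
- by move=> [p' [pi [pi' [[<- <-] [-> H]]]]]; exists pi.
- by move=> [ps [-> H]]; exists p, ps, r.
Qed.

Lemma Mfull_nil pi2 i j a : ~ Mf [::] pi2 i j a.
Proof. by move=> [? [? [? []]]]. Qed.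

Lemma RunQ_inv pi i z j w q : RunQ pi i z j w q ->
  (z = pi /\ j = i /\ w = [::] /\ q = [::]) \/
  exists pi1 k a w' q', Mf pi pi1 i k a /\ RunQ pi1 k z j w' q' /\ w = optw a ++ w' /\ q = i :: q'.
Proof.
case=> [pi0 i0|pi0 i0 pi1 k pi' j0 a w0 qs Hm Hr]; first by left.
by right; exists pi1, k, a, w0, qs.
Qed.

Lemma RunQ_nil i pi' j w qs : RunQ [::] i pi' j w qs -> pi' = [::] /\ j = i /\ w = [::] /\ qs = [::].
Proof.
move/RunQ_inv => [//|[pi1 [k [a [w' [q' [Hm _]]]]]]]; exfalso; exact: Mfull_nil Hm.
Qed.

Lemma RunQ_suffix x i x' j w qs y : RunQ x i x' j w qs -> RunQ (x ++ y) i (x' ++ y) j w qs.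
Proof.
elim=> [pi k|pi k pi1 k1 pi' j' a w' qs' Hm _ IH]; first exact: RunQ0.
apply: RunQS IH; move: Hm => [p [ps [r [-> [-> H]]]]].
by exists p, ps, (r ++ y); rewrite catA.
Qed.

Lemma RunQ_trans a i b j w q c k w' q' :
  RunQ a i b j w q -> RunQ b j c k w' q' -> RunQ a i c k (w ++ w') (q ++ q').
Proof.
elim=> // pi i0 pi1 k0 pi' j0 a0 w0 qs Hm _ IH H.
rewrite -catA /=; exact: RunQS Hm (IH H).
Qed.

Lemma RunQ_split_gen s i z j w qs : RunQ s i z j w qs -> z = [::] -> forall x y, s = x ++ y ->
  exists k w1 w2 q1 q2, RunQ x i [::] k w1 q1 /\ RunQ y k [::] j w2 q2 /\ w = w1 ++ w2 /\ qs = q1 ++ q2.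
Proof.
elim=> [pi k | pi k pi1 k1 pi' j' a w' qs' Hm Hr IH] Hz x y Hs.
- subst; case: x Hs => // ; case: y => // _.
  by exists k, [::], [::], [::], [::]; split; [exact: RunQ0|split; [exact: RunQ0|]].
- case: x Hs => [|p x'] Hs /=.
  + subst; exists k, [::], (optw a ++ w'), [::], (k :: qs').
    by split; [exact: RunQ0| split; [exact: RunQS Hm Hr|]].
  + rewrite Hs in Hm; move/Mfull_cons: Hm => [ps [Hpi1 Hb]].
    have E : pi1 = (ps ++ x') ++ y by rewrite Hpi1 catA.
    have [k2 [w1 [w2 [q1 [q2 [H1 [H2 [-> ->]]]]]]]] := IH Hz (ps ++ x') y E.
    exists k2, (optw a ++ w1), w2, (k :: q1), q2; split.
    * apply: RunQS H1; apply/Mfull_cons; by exists ps.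
    * by split => //; rewrite catA.
Qed.

Lemma RunQ_split x y i j w qs : RunQ (x ++ y) i [::] j w qs ->
  exists k w1 w2 q1 q2, RunQ x i [::] k w1 q1 /\ RunQ y k [::] j w2 q2 /\ w = w1 ++ w2 /\ qs = q1 ++ q2.
Proof. move=> H; exact: RunQ_split_gen H erefl x y erefl. Qed.

Lemma Mstar_RunQ pi i pi' j w : Mstar Mb pi i pi' j w <-> exists qs, RunQ pi i pi' j w qs.
Proof.
split.
- elim=> [pi0 i0|pi0 i0 pi1 k pi'0 j0 a w0 Hm _ [qs IH]]; first by exists [::]; exact: RunQ0.
  by exists (i0 :: qs); exact: RunQS Hm IH.
- move=> [qs]; elim=> [pi0 i0|pi0 i0 pi1 k pi'0 j0 a w0 qs0 Hm _ IH]; first exact: Mstar0.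
  exact: MstarS Hm IH.
Qed.

Definition SemA (A : xs) (w : seq Sigma) (q : seq 'I_n) : Prop :=
  match A with
  | XT c => w = [:: c] /\ q = [::]
  | X0 => exists m1 m2 a1 u a2, I m1 a1 /\ RunQ [:: p0] m1 [::] m2 u q /\ P m2 a2 /\
            w = optw a1 ++ u ++ optw a2
  | XV i p j => RunQ [:: p] i [::] j w q
  end.

Fixpoint Sem (s : seq xs) (w : seq Sigma) (q : seq 'I_n) : Prop :=
  match s with
  | [::] => w = [::] /\ q = [::]
  | A :: s' => exists w1 w2 q1 q2, w = w1 ++ w2 /\ q = q1 ++ q2 /\ SemA A w1 q1 /\ Sem s' w2 q2
  end.

Lemma Sem_cat s1 s2 w q : Sem (s1 ++ s2) w q <->
  exists w1 w2 q1 q2, w = w1 ++ w2 /\ q = q1 ++ q2 /\ Sem s1 w1 q1 /\ Sem s2 w2 q2.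
Proof.
elim: s1 w q => [|A s1 IH] w q /=.
- split; first by move=> H; exists [::], w, [::], q.
  by move=> [w1 [w2 [q1 [q2 [-> [-> [[-> ->] H]]]]]]].
- split.
  + move=> [w1 [w2 [q1 [q2 [-> [-> [HA /IH [b [W2 [d [Q2 [-> [-> [Hb HW]]]]]]]]]]]]]].
    exists (w1 ++ b), W2, (q1 ++ d), Q2; rewrite !catA; do 2!split => //.
    split => //; by exists w1, b, q1, d.
  + move=> [W1 [W2 [Q1 [Q2 [-> [-> [[w1 [b [q1 [d [-> [-> [HA Hb]]]]]]] HW]]]]]]].
    exists w1, (b ++ W2), q1, (d ++ Q2); rewrite !catA; do 3!split => //.
    apply/IH; by exists b, W2, d, Q2.
Qed.

Lemma Sem_terms u w q : Sem (map XTn u) w q <-> w = u /\ q = [::].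
Proof.
elim: u w q => [|c u IH] w q //=; split.
- by move=> [w1 [w2 [q1 [q2 [-> [-> [[-> ->] /IH [-> ->]]]]]]]].
- move=> [-> ->]; exists [:: c], u, [::], [::]; do 3!split => //; exact/IH.
Qed.

Lemma Sem_chain ms ps j u q : size ms = size ps -> Sem (ch ms ps j) u q -> RunQ ps (head j ms) [::] j u q.
Proof.
elim: ms ps u q => [|m ms IH] [|p ps] //= u q Hsz.
- move=> [-> ->]; exact: RunQ0.
- move=> [w1 [w2 [q1 [q2 [-> [-> [H1 H2]]]]]]].
  have E : size ms = size ps by case: Hsz.
  have H3 := IH ps w2 q2 E H2.
  exact: RunQ_trans (RunQ_suffix ps H1) H3.
Qed.

Lemma lderiv_sem_gen s s' tr : LD s s' tr -> forall w, s' = map XTn w -> Sem s w (firsts tr).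
Proof.
elim=> [s0 | s0 A s1 s2 tr' Hst Hd IH] w Hz.
- subst; exact/Sem_terms.
- have := IH w Hz; case: Hst Hd IH => u A' g beta Hp _ _.
  move/Sem_cat => [w1 [w2 [q1 [q2 [-> [Hq [/Sem_terms [-> Hq1]
     /Sem_cat [wg [wb [qg [qb [Hw2 [Hq2 [Hg Hb]]]]]]]]]]]]]].
  subst q1 q2 w2.
  apply/Sem_cat; exists u, (wg ++ wb), [::], (firsts (A' :: tr')).
  do 2!split => //; split; first exact/Sem_terms.
  case: A' Hp Hq => [c //|/=|i p j /=].
  + move=> [a1 [m1 [m2 [a2 [HI [HP Hgd]]]]]] ->; rewrite Hgd in Hg.
    move: Hg => /Sem_cat [x1 [x2 [y1 [y2 [-> [-> [/Sem_terms [-> ->]]]]]]]].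
    move=> [v1 [v2 [r1 [r2 [-> [-> [HV /Sem_terms [-> ->]]]]]]]].
    exists (optw a1 ++ v1 ++ optw a2), wb, r1, qb; rewrite /= !cats0 !catA.
    split; first done. split; first done. split; last done.
    by exists m1, m2, a1, v1, a2; rewrite -catA.
  + move=> [a [ps [ms [Hsz [HM Hgd]]]]] ->; rewrite Hgd in Hg.
    move: Hg => /Sem_cat [x1 [x2 [y1 [y2 [-> [-> [/Sem_terms [-> ->] Hc]]]]]]].
    exists (optw a ++ x2), wb, (i :: y2), qb.
    split; first done. split; first done. split; last done.
    apply: RunQS (Sem_chain Hsz Hc); apply/Mfull_cons; exists ps; by rewrite cats0.
Qed.

Lemma lderiv_sem s w tr : LD s (map XTn w) tr -> Sem s w (firsts tr).
Proof. move=> H; exact: lderiv_sem_gen H w erefl. Qed.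

Lemma lderiv_catr s s' t tr : LD s s' tr -> LD (s ++ t) (s' ++ t) tr.
Proof.
elim=> [s0|s0 A s1 s2 tr' Hst _ IH]; first exact: LDeriv0.
apply: LDerivS IH; case: Hst => u A' g beta Hp.
rewrite -!catA /=; exact: LStep.
Qed.

Lemma lderiv_catl u s s' tr : LD s s' tr -> LD (map XTn u ++ s) (map XTn u ++ s') tr.
Proof.
elim=> [s0|s0 A s1 s2 tr' Hst _ IH]; first exact: LDeriv0.
apply: LDerivS IH; case: Hst => u' A' g beta Hp.
have := LStep (u ++ u') beta Hp; by rewrite map_cat -!catA.
Qed.

Lemma lderiv_trans s1 s2 s3 tr1 tr2 : LD s1 s2 tr1 -> LD s2 s3 tr2 -> LD s1 s3 (tr1 ++ tr2).
Proof.
elim=> // s0 A s' s'' tr Hst _ IH H; exact: LDerivS Hst (IH H).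
Qed.

Lemma lderiv_cat s1 s2 w1 w2 tr1 tr2 : LD s1 (map XTn w1) tr1 -> LD s2 (map XTn w2) tr2 ->
  LD (s1 ++ s2) (map XTn (w1 ++ w2)) (tr1 ++ tr2).
Proof.
move=> H1 H2; rewrite map_cat; apply: lderiv_trans (lderiv_catr _ H1) (lderiv_catl _ H2).
Qed.

Lemma lderiv_one A g : prodX Mb I P p0 A g -> LD [:: A] g [:: A].
Proof.
move=> Hp; have := LStep [::] [::] Hp; rewrite /= cats0 => H.
exact: LDerivS H (LDeriv0 _ _ _ _ _).
Qed.

Lemma run_chain N : forall ps i j u qs, size qs < N -> RunQ ps i [::] j u qs ->
  exists ms, size ms = size ps /\ head j ms = i /\
    exists tr, LD (ch ms ps j) (map XTn u) tr /\ firsts tr = qs.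
Proof.
elim: N => [//|N IHN] ps; elim: ps => [|p ps IHps] i j u qs Hsz H.
- move/RunQ_nil: H => [_ [-> [-> ->]]].
  exists [::]; do 2!split => //; exists [::]; split => //; exact: LDeriv0.
- have [k [w1 [w2 [q1 [q2 [H1 [H2 [-> Hq]]]]]]]] := RunQ_split (x := [:: p]) (y := ps) H.
  move/RunQ_inv: H1 => [[//]|[pi1 [k1 [a [w' [q' [Hm [Hr [-> Hq1]]]]]]]]].
  move/Mfull_cons: Hm => [ps0 [Hpi1 HM]]; rewrite Hpi1 cats0 in Hr.
  subst qs q1.
  have E1 : size q' < N by move: Hsz; rewrite /= size_cat; lia.
  have E2 : size q2 < N.+1 by move: Hsz; rewrite /= size_cat; lia.
  have [ms0 [Hsz0 [Hh0 [tr0 [Hd0 Hf0]]]]] := IHN ps0 k1 k w' q' E1 Hr.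
  have [ms' [Hsz' [Hh' [tr2 [Hd2 Hf2]]]]] := IHps k j w2 q2 E2 H2.
  exists (i :: ms'); split; first by rewrite /= Hsz'.
  split => //; exists ((XV Sigma i p k :: tr0) ++ tr2); split.
  + rewrite /= Hh' -cat1s; apply: (lderiv_cat (tr1 := XV Sigma i p k :: tr0)) => //.
    apply: (lderiv_trans (tr1 := [:: XV Sigma i p k]) (tr2 := tr0)).
    * apply: lderiv_one; exists a, ps0, ms0; by rewrite Hh0.
    * rewrite map_cat; exact: lderiv_catl.
  + by rewrite -Hf0 -Hf2 /firsts pmap_cat.
Qed.

Lemma run_triple p i j w qs : RunQ [:: p] i [::] j w qs ->
  exists tr, LD [:: XV Sigma i p j] (map XTn w) tr /\ firsts tr = qs.
Proof.
move=> H; have [[|m [|? ?]] [//= _ [Hh [tr [Hd Hf]]]]] := @run_chain (size qs).+1 _ _ _ _ _ (ltnSn _) H.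
by exists tr; rewrite -Hh.
Qed.

Lemma fin_equiv w : LG_fin Mb I P p0 w <-> sigma_x0 Mb I P p0 w.
Proof.
split.
- move=> [tr /lderiv_sem /= [w1 [w2 [q1 [q2 [-> [_ [HA [-> _]]]]]]]]].
  move: HA => [m1 [m2 [a1 [u [a2 [HI [HR [HP ->]]]]]]]].
  exists m1, m2, a1, u, a2; rewrite cats0; do 2!split => //.
  apply/Mstar_RunQ; by exists q1.
- move=> [m1 [m2 [a1 [u [a2 [HI [/Mstar_RunQ [qs HR] [HP ->]]]]]]]].
  have [tr [Hd _]] := run_triple HR.
  exists ([:: X0 Sigma Gamma n] ++ ([::] ++ tr ++ [::])).
  apply: lderiv_trans.
  + apply: lderiv_one; by exists a1, m1, m2, a2.
  + apply: lderiv_cat; first exact: LDeriv0.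
    apply: (lderiv_cat (s1 := [:: XV Sigma m1 p0 m2])) => //; exact: LDeriv0.
Qed.

End PDA2.

Lemma choice_nat (A : Type) (R : nat -> A -> Prop) :
  (forall m, exists a, R m a) -> exists f : nat -> A, forall m, R m (f m).
Proof.
move=> H; exists (fun m => proj1_sig (constructive_indefinite_description _ (H m))).
move=> m; exact: proj2_sig (constructive_indefinite_description _ (H m)).
Qed.

Section PDA3.
Variables (Sigma Gamma : finType) (n : nat).
Variable Mb : Gamma -> seq Gamma -> 'I_n -> 'I_n -> option Sigma -> bool.
Variables (I P : 'I_n -> option Sigma -> bool) (p0 : Gamma) (l : nat).

Local Notation xs := (xsym Sigma Gamma n).
Local Notation XTn := (@XT Sigma Gamma n).
Local Notation Mf := (Mfull Mb).
Local Notation LD := (lderiv Mb I P p0).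
Local Notation tp := (topt Gamma n).
Local Notation ch := (chain Sigma).
Local Notation RQ := (RunQ Mb).

Definition step := (seq Gamma * 'I_n * option Sigma)%type.
Definition nextc (st : seq step) (c' : seq Gamma * 'I_n) := head c' (map (fun x => x.1) st).

Fixpoint pathok (c : seq Gamma * 'I_n) (st : seq step) (c' : seq Gamma * 'I_n) : Prop :=
  match st with
  | [::] => c = c'
  | x :: st' => x.1 = c /\ Mf x.1.1 (nextc st' c').1 x.1.2 (nextc st' c').2 x.2 /\
                pathok (nextc st' c') st' c'
  end.

Lemma pathok_head c st c' : pathok c st c' -> nextc st c' = c.
Proof. by case: st => [->|x st [Hx _]]. Qed.

Lemma RunQ_path pi i pi' j w qs : RQ pi i pi' j w qs ->
  exists st, pathok (pi, i) st (pi', j) /\ map (fun x => x.1.2) st = qs /\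
             flatten (map (fun x => optw x.2) st) = w.
Proof.
elim=> [pi0 i0 | pi0 i0 pi1 k pi'0 j0 a w0 qs0 Hm _ [st [Hp [Hq Hw]]]].
- by exists [::].
- exists ((pi0, i0, a) :: st); rewrite /= (pathok_head Hp) Hq Hw; do 2!split => //.
Qed.

Lemma pathok_nth c st c' (x0 : step) o : pathok c st c' -> o < size st ->
  Mf (nth x0 st o).1.1 (if o.+1 < size st then (nth x0 st o.+1).1 else c').1
     (nth x0 st o).1.2 (if o.+1 < size st then (nth x0 st o.+1).1 else c').2 (nth x0 st o).2.
Proof.
elim: st c o => [//|x st IH] c [|o] /= [Hx [Hm Hp]] Ho.
- by case: st Hm {IH Hp Ho}.
- exact: IH Hp Ho.
Qed.

Lemma pathok_first c st c' (x0 : step) : pathok c st c' -> 0 < size st -> (nth x0 st 0).1 = c.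
Proof. by case: st => [//|x st [Hx _]]. Qed.

Fixpoint Racc (ext : nat -> seq Gamma) m : seq Gamma :=
  if m is m'.+1 then ext m' ++ Racc ext m' else [::].

Lemma omega_sound w : LG_omega Mb I P p0 l w -> tau_z0 Mb I p0 l w.
Proof.
move=> [iq [alpha [W [tr [H0 [HZ [HD [HW HPl]]]]]]]].
have [ext Hext] : exists ext : nat -> seq Gamma, forall m rest,
    RQ ((iq m).2 :: rest) (iq m).1 ((iq m.+1).2 :: ext m ++ rest) (iq m.+1).1 (W m.+1)
       ((iq m).1 :: firsts (tr m.+1)).
  apply: (choice_nat (R := fun m e => forall rest, RQ ((iq m).2 :: rest) (iq m).1
      ((iq m.+1).2 :: e ++ rest) (iq m.+1).1 (W m.+1) ((iq m).1 :: firsts (tr m.+1)))).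
  move=> m; have [a [ps1 [ps2 [ms1 [Hsz [HM Ha]]]]]] := HZ m.
  have := lderiv_sem (HD m.+1); rewrite Ha.
  move/Sem_cat => [x1 [x2 [y1 [y2 [-> [-> [/Sem_terms [-> ->] Hc]]]]]]].
  exists ps2 => rest; apply: RunQS.
  - apply/Mfull_cons; exists (ps1 ++ (iq m.+1).2 :: ps2); split; last exact: HM.
    by rewrite -catA.
  - exact: (RunQ_suffix ((iq m.+1).2 :: ps2 ++ rest) (Sem_chain Hsz Hc)).
pose Stk m := (iq m).2 :: Racc ext m.
have [st Hst] : exists st : nat -> seq step, forall m,
    pathok (Stk m, (iq m).1) (st m) (Stk m.+1, (iq m.+1).1) /\
    map (fun x => x.1.2) (st m) = (iq m).1 :: firsts (tr m.+1) /\
    flatten (map (fun x => optw x.2) (st m)) = W m.+1.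
  apply: (choice_nat (R := fun m s => pathok (Stk m, (iq m).1) s (Stk m.+1, (iq m.+1).1) /\
    map (fun x => x.1.2) s = (iq m).1 :: firsts (tr m.+1) /\
    flatten (map (fun x => optw x.2) s) = W m.+1)) => m.
  apply: RunQ_path; exact: Hext.
have Hne m : 0 < size (st m) by rewrite -(size_map (fun x => x.1.2)) (Hst m).2.1.
pose x0 : step := ([::], (iq 0).1, None).
pose stp := flat x0 st.
have Hic : is_inf_concat st stp by exact: flat_ic.
have HM t : Mf (stp t).1.1 (stp t.+1).1.1 (stp t).1.2 (stp t.+1).1.2 (stp t).2.
  have [m [o [Ho [-> ->]]]] := ic_spec x0 Hne Hic t.
  have := pathok_nth x0 (Hst m).1 Ho.
  case: ifP => //; by rewrite (pathok_first x0 (Hst m.+1).1 (Hne m.+1)).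
have Hs0 : (stp 0).1 = (Stk 0, (iq 0).1).
  have H00 : 0 < size (flatten (mkseq st 1)) by rewrite /= cats0.
  case: Hic => Ha _; have := Ha 0 0 H00; rewrite /= cats0 (set_nth_default x0) ?Hne //.
  move=> ->; exact: pathok_first (Hst 0).1 (Hne 0).
move: H0 => [a0 [HI [Hp0 Ha0]]].
have HW0 : W 0 = optw a0.
  by have := lderiv_sem (HD 0); rewrite Ha0 => /Sem_terms [].
pose js t := (stp t).1.2.
pose r m := (iq m).1 :: firsts (tr m.+1).
pose g m := if m is m'.+1 then firsts (tr m) ++ [:: (iq m).1] else [:: (iq 0).1].
have Hr : is_inf_concat r js.
  have := ic_map (fun x : step => x.1.2) Hic.
  have -> // : (fun m => map (fun x : step => x.1.2) (st m)) = r.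
  by apply: functional_extensionality => m; rewrite (Hst m).2.1.
have Eg m : flatten (mkseq g m.+1) = flatten (mkseq r m) ++ [:: (iq m).1].
  elim: m => [|m IH]; first by [].
  by rewrite preS IH (preS r m) /= -!catA.
have Hg : is_inf_concat g js.
  apply: (ic_regroup _ _ Hr).
  - move=> m; exists m.+1, [:: (iq m.+1).1]; by rewrite Eg.
  - move=> m'; exists m', (firsts (tr m'.+1)); by rewrite Eg preS -catA.
have Hgne m : 0 < size (g m) by case: m => [|m] //=; rewrite size_cat addn1.
have Efl k : flat (iq 0).1 g k = js k.
  exact: ic_unique (flat_ic _ Hgne) Hg k.
pose w' := fun k => w (size (W 0) + k).
have Hw' : is_inf_concat (fun t => optw (stp t).2) w'.
  apply: (ic_flatmap (h := fun x : step => optw x.2) Hne Hic).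
  have := ic_shift HW.
  have -> // : (fun m => W m.+1) = (fun m => flatten (map (fun x : step => optw x.2) (st m))).
  by apply: functional_extensionality => m; rewrite (Hst m).2.2.
exists (iq 0).1, a0, w'; split => //; split.
- exists (fun t => (stp t).1.1), js, (fun t => (stp t).2); split.
    by rewrite Hs0 /Stk /= Hp0.
  split; first by rewrite /js Hs0.
  split; first exact: HM.
  split; last exact: Hw'.
  move=> N; have [t [Ht Hl]] := HPl N.+1.
  case: t Ht Hl => [//|t] Ht Hl; exists t; split => //.
  by rewrite -Efl.
- apply: functional_extensionality => k; rewrite -HW0; symmetry; exact: ic_prepend_eq.
Qed.

End PDA3.

Lemma flat_iota_split (S : Type) (V : nat -> seq S) a b : a <= b ->
  flatten (map V (iota 0 b)) = flatten (map V (iota 0 a)) ++ flatten (map V (iota a (b - a))).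
Proof. move=> H; by rewrite -{1}(subnKC H) iotaD map_cat flatten_cat. Qed.

Lemma least_nat (Pr : nat -> Prop) : (exists k, Pr k) -> exists k, Pr k /\ forall k', Pr k' -> k <= k'.
Proof.
move=> [k Hk]; case: (classic (exists k, Pr k /\ forall k', Pr k' -> k <= k')) => // Hno.
exfalso.
have H : forall N j, j <= N -> ~ Pr j.
  elim=> [|N IH] j Hj Pj.
  - apply: Hno; exists j; split => // k' _; move: Hj; lia.
  - case: (ltnP j N.+1) => Hj'.
    + exact: IH j Hj' Pj.
    + apply: Hno; exists j; split => // k' Pk'; rewrite leqNgt; apply/negP => Hlt.
      have Hk' : k' <= N by lia.
      exact: IH k' Hk' Pk'.
exact: (H k k (leqnn k) Hk).
Qed.

Section PDA4.
Variables (Sigma Gamma : finType) (n : nat).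
Variable Mb : Gamma -> seq Gamma -> 'I_n -> 'I_n -> option Sigma -> bool.
Variables (I P : 'I_n -> option Sigma -> bool) (p0 : Gamma) (l : nat).

Local Notation xs := (xsym Sigma Gamma n).
Local Notation XTn := (@XT Sigma Gamma n).
Local Notation Mf := (Mfull Mb).
Local Notation LD := (lderiv Mb I P p0).
Local Notation tp := (topt Gamma n).
Local Notation ch := (chain Sigma).
Local Notation RQ := (RunQ Mb).

Section Stream.
Variables (pis : nat -> seq Gamma) (js : nat -> 'I_n) (as_ : nat -> option Sigma).
Hypothesis HM : forall t, Mf (pis t) (pis t.+1) (js t) (js t.+1) (as_ t).

Lemma seg d : forall a x y, pis a = x ++ y ->
  (forall s, a <= s < a + d -> size y < size (pis s)) ->
  exists z, pis (a + d) = z ++ y /\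
    RQ x (js a) z (js (a + d)) (flatten (map (fun s => optw (as_ s)) (iota a d))) (map js (iota a d)).
Proof.
elim: d => [|d IH] a x y Hx Hs.
- exists x; rewrite addn0; split => //; exact: RunQ0.
- have Ha : size y < size (pis a) by apply: Hs; lia.
  rewrite Hx size_cat in Ha.
  case: x Hx Ha => [|p x'] Hx Ha; first by rewrite /= ltnn in Ha.
  have := HM a; rewrite Hx /= => /Mfull_cons [ps [E HMb]].
  have E' : pis a.+1 = (ps ++ x') ++ y by rewrite E catA.
  have Hs' : forall s, a.+1 <= s < a.+1 + d -> size y < size (pis s).
    move=> s Hs1; apply: Hs; lia.
  have [z [Hz HR]] := IH a.+1 (ps ++ x') y E' Hs'.
  exists z; rewrite -addSnnS; split => //=.
  apply: RunQS HR; apply/Mfull_cons; by exists ps.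
Qed.

End Stream.

Lemma omega_complete w : tau_z0 Mb I p0 l w -> LG_omega Mb I P p0 l w.
Proof.
move=> [m0 [a0 [w' [HI [[pis [js [as_ [Hp0 [Hj0 [HM [HPl Hw']]]]]]] ->]]]]].
have Hne t : 0 < size (pis t).
  by have := HM t; case: (pis t) => [/Mfull_nil|].
pose ht t := size (pis t).
pose stable t := forall s, t <= s -> ht t <= ht s.
have Hnext t : stable t -> exists t', t < t' /\ stable t' /\ (forall s, t < s < t' -> ht t' < ht s).
  move=> Hst.
  have [hmin [[s1 [Hs1 Hh1]] Hmin]] := least_nat (Pr := fun h => exists s, t < s /\ ht s = h)
      (ex_intro _ (ht t.+1) (ex_intro _ t.+1 (conj (ltnSn t) erefl))).
  have [t' [[Ht' Hh'] Hmin']] := least_nat (Pr := fun s => t < s /\ ht s = hmin)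
      (ex_intro _ s1 (conj Hs1 Hh1)).
  exists t'; split => //; split.
  - move=> s Hs; rewrite Hh'; apply: Hmin; exists s; split => //; lia.
  - move=> s Hs; rewrite Hh'.
    have H1 : hmin <= ht s by apply: Hmin; exists s; split => //; lia.
    rewrite ltn_neqAle H1 andbT; apply/eqP => Heq.
    have := Hmin' s (conj (proj1 (andP Hs)) (esym Heq)); lia.
have [nx Hnx] : exists nx : nat -> nat, forall t, stable t ->
    t < nx t /\ stable (nx t) /\ (forall s, t < s < nx t -> ht (nx t) < ht s).
  apply: (choice_nat (R := fun t t' => stable t ->
    t < t' /\ stable t' /\ (forall s, t < s < t' -> ht t' < ht s))) => t.
  case: (classic (stable t)) => H.
  - have [t' Ht'] := Hnext t H; by exists t'.
  - by exists 0.
pose Tm m := iter m nx 0.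
have HTs m : stable (Tm m).
  elim: m => [|m IH].
  - move=> s _; rewrite /ht /= Hp0; exact: Hne.
  - exact: (Hnx _ IH).2.1.
have HT m : Tm m < Tm m.+1 /\ (forall s, Tm m < s < Tm m.+1 -> ht (Tm m.+1) < ht s).
  have := Hnx _ (HTs m); rewrite /Tm /= => -[? [_ ?]]; by split.
have HTge m : m <= Tm m.
  elim: m => [//|m IH]; have := (HT m).1; lia.
pose iq m := (js (Tm m), head p0 (pis (Tm m))).
pose Wf m := flatten (map (fun s => optw (as_ s)) (iota (Tm m) (Tm m.+1 - Tm m))).
have [f Hf] : exists f : nat -> seq xs * seq xs, forall m,
    prodZ Mb (iq m) (f m).1 (iq m.+1) /\ LD (f m).1 (map XTn (Wf m)) (f m).2 /\
    firsts (f m).2 = map js (iota (Tm m).+1 (Tm m.+1 - (Tm m).+1)).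
  apply: (choice_nat (R := fun m x => prodZ Mb (iq m) x.1 (iq m.+1) /\
    LD x.1 (map XTn (Wf m)) x.2 /\
    firsts x.2 = map js (iota (Tm m).+1 (Tm m.+1 - (Tm m).+1)))) => m.
  set t := Tm m; set t' := Tm m.+1.
  have [Htt' Hbtw] := HT m.
  case Hpt : (pis t) (Hne t) => [//|p rest] _.
  have := HM t; rewrite Hpt => /Mfull_cons [ps [Hps HMb]].
  set hmin := size (pis t').
  have Hh1 : size rest < hmin.
    have := HTs m t' (ltnW Htt'); rewrite /ht Hpt /=; lia.
  have Hh2 : hmin <= size ps + size rest.
    have : hmin <= size (pis t.+1).
      case: (ltngtP t.+1 t') => Hc.
      + apply: ltnW; apply: Hbtw; lia.
      + lia.
      + by rewrite Hc.
    by rewrite Hps size_cat.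
  set k := size ps + size rest - hmin.
  have Hdrop : 0 < size (drop k ps) by rewrite size_drop; lia.
  case Hd : (drop k ps) Hdrop => [//|q ps2] _.
  set ps1 := take k ps.
  have Hps1 : ps = ps1 ++ q :: ps2 by rewrite -Hd cat_take_drop.
  have Ey : pis t.+1 = ps1 ++ (q :: ps2 ++ rest) by rewrite Hps Hps1 -catA.
  have Hsy : size (q :: ps2 ++ rest) = hmin.
    have := size_drop k ps; rewrite Hd /= size_cat; lia.
  have Hs' : forall s, t.+1 <= s < t.+1 + (t' - t.+1) -> size (q :: ps2 ++ rest) < size (pis s).
    move=> s Hs; rewrite Hsy; apply: Hbtw; lia.
  have [z [Hz HR]] := seg HM Ey Hs'.
  have Et' : t.+1 + (t' - t.+1) = t' by lia.
  rewrite Et' in Hz HR.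
  have Hz0 : z = [::].
    have := congr1 size Hz; rewrite size_cat Hsy -/hmin; case: z {Hz HR} => //= ? ? ; lia.
  subst z.
  have [ms1 [Hsz1 [Hh [tr' [Hd' Hf']]]]] := run_chain I P p0 (ltnSn _) HR.
  exists (tp (as_ t) ++ ch ms1 ps1 (js t'), tr'); split; last split.
  - exists (as_ t), ps1, ps2, ms1; split => //; split => //.
    by rewrite /iq /= Hpt /= Hz /= Hh -Hps1.
  - have -> : Wf m = optw (as_ t) ++ flatten (map (fun s => optw (as_ s)) (iota t.+1 (t' - t.+1))).
      rewrite /Wf -/t -/t'; have -> : t' - t = (t' - t.+1).+1 by lia.
      by [].
    rewrite -[tr']cat0s; apply: lderiv_cat => //; exact: LDeriv0.
  - by [].
pose alpha k := if k is m.+1 then (f m).1 else tp a0.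
pose tr k := if k is m.+1 then (f m).2 else [::].
pose W k := if k is m.+1 then Wf m else optw a0.
exists iq, alpha, W, tr; split.
  exists a0; by rewrite /iq /= Hp0 Hj0.
split; first by move=> m; exact: (Hf m).1.
split; first by case=> [|m]; [exact: LDeriv0 | exact: (Hf m).2.1].
have HTpos m : 0 < Tm m.+1 by have := HTge m.+1; lia.
have EW m : flatten (mkseq Wf m.+1) = flatten (mkseq (fun t => optw (as_ t)) (Tm m.+1)).
  elim: m => [|m IH].
  - by rewrite /= cats0 /Wf subn0.
  - rewrite preS IH /mkseq (flat_iota_split (fun t => optw (as_ t)) (ltnW (HT m.+1).1)).
    by [].
split.
- apply: ic_cons; apply: (ic_regroup _ _ Hw').
  + move=> m; exists m; rewrite EW.
    exists (flatten (map (fun t => optw (as_ t)) (iota m.+1 (Tm m.+1 - m.+1)))).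
    by rewrite /mkseq (flat_iota_split (fun t => optw (as_ t)) (HTge m.+1)).
  + move=> m'; exists (Tm m'.+1).-1, [::]; by rewrite EW cats0 prednK.
- pose gram := fun m : nat => match m with
                       | 0 => [:: (iq 0).1]
                       | _.+1 => firsts (tr m) ++ [:: (iq m).1]
                       end.
  have Eg m : flatten (mkseq gram m.+1) = map js (iota 0 (Tm m).+1).
    elim: m => [|m IH]; first by [].
    rewrite preS IH /gram /tr (Hf m).2.2.
    have E : (Tm m.+1).+1 = (Tm m).+1 + ((Tm m.+1 - (Tm m).+1) + 1).
      have := (HT m).1; lia.
    rewrite E iotaD iotaD !map_cat add0n subnKC; last exact: (HT m).1.
    by [].
  have Hg : is_inf_concat gram js.
    apply: (ic_regroup _ _ (ic_single js)).
    + move=> m; exists m; rewrite Eg /mkseq flatten_single.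
      have [s Hs] := mkseq_le js (HTge m : m.+1 <= (Tm m).+1).
      by exists s; rewrite /mkseq in Hs; rewrite Hs.
    + move=> m'; exists (Tm m'), [::]; by rewrite Eg cats0 /mkseq flatten_single.
  have Hgne m : 0 < size (gram m) by case: m => [|m] //=; rewrite size_cat addn1.
  have Efl k : flat (iq 0).1 gram k = js k by exact: ic_unique (flat_ic _ Hgne) Hg k.
  have Hpl : in_Pl l (flat (iq 0).1 gram).
    move=> N; have [t [Ht Hl]] := HPl N; exists t.+1; split; first lia.
    by rewrite Efl.
  exact: Hpl.
Qed.

End PDA4.

Theorem theorem14 (Sigma Gamma : finType) (n : nat)
  (Mb : Gamma -> seq Gamma -> 'I_n -> 'I_n -> option Sigma -> bool)
  (I P : 'I_n -> option Sigma -> bool) (p0 : Gamma) (l : nat) :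
  pd_finite Mb -> l <= n ->
  (forall w : seq Sigma, LG_fin Mb I P p0 w <-> sigma_x0 Mb I P p0 w) /\
  (forall w : nat -> Sigma, LG_omega Mb I P p0 l w <-> tau_z0 Mb I p0 l w).
Proof.
move=> _ _; split; first exact: fin_equiv.
move=> w; split; [exact: omega_sound | exact: omega_complete].
Qed.
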